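(* The formal power series $L$ and $R$ satisfy $L(z,x)=x^{-1}\bigl(L(z,x)-xL_1(z)\bigr)+R(z,x)$ and $R(z,x)=z\,R(z,x)\,L(z,x)+x$, where $L_1(z)$ is the coefficient of $x^1$ in $L(z,x)$.
   Context: Formulas are built from atoms by a binary product: every formula is an atom or $A\bullet B$. A context is a finite (possibly empty) list of formulas; commas denote concatenation; its length is its number of formulas. Size: $|p|=0$, $|A\bullet B|=1+|A|+|B|$. Frontier: $\mathrm{fr}(p)=p$, $\mathrm{fr}(A\bullet B)=\mathrm{fr}(A),\mathrm{fr}(B)$. A context is irreducible if its leftmost formula is not a product (it is empty or begins with an atom). A focused derivation is a finite derivation tree with no undischarged premises using only: ($\bullet L$) from $A,B,\Delta\vdash C$ infer $A\bullet B,\Delta\vdash C$; ($\bullet R^{foc}$) from $\Gamma\vdash A$ and $\Delta\vdash B$ infer $\Gamma,\Delta\vdash A\bullet B$ with $\Gamma$ irreducible; ($id^{atm}$) $p\vdash p$ for atoms $p$. For each $n$ fix the frontier $p_0,\dots,p_n$ of distinct atoms. Let $\ell_{n,k}$ (resp. $r_{n,k}$) be the number of focused derivations of sequents $\Gamma\vdash B$ with $|B|=n$, $\mathrm{fr}(B)=p_0,\dots,p_n$, and $\Gamma$ a context (resp. an irreducible context) of length $k$. $L(z,x)=\sum_{n,k}\ell_{n,k}z^nx^k$ and $R(z,x)=\sum_{n,k}r_{n,k}z^nx^k$. *)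

(* Defs.v *)
From mathcomp Require Import all_boot all_algebra.
Set Implicit Arguments. Unset Strict Implicit. Unset Printing Implicit Defensive.
Import GRing.Theory.
Local Open Scope ring_scope.

Inductive fml : Type :=
| At : nat -> fml
| Prod : fml -> fml -> fml.

Fixpoint fsize (A : fml) : nat :=
  match A with At _ => 0 | Prod A B => (fsize A + fsize B).+1 end.

Fixpoint fr (A : fml) : seq nat :=
  match A with At p => [:: p] | Prod A B => fr A ++ fr B end.

Definition irreducible (G : seq fml) : bool :=
  match G with [::] => true | At _ :: _ => true | Prod _ _ :: _ => false end.

(* Focused derivations of  G |- C  (proof-relevant: inhabitants are derivation trees). *)
Inductive deriv : seq fml -> fml -> Type :=
| d_id (p : nat) : deriv [:: At p] (At p)
| d_L (A B : fml) (D : seq fml) (C : fml) :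
    deriv (A :: B :: D) C -> deriv (Prod A B :: D) C
| d_R (G D : seq fml) (A B : fml) :
    irreducible G -> deriv G A -> deriv D B -> deriv (G ++ D) (Prod A B).

(* Sequents counted by l_{n,k}: |B| = n, fr(B) = p_0..p_n with p_i := At i,
   context of length k (and irreducible for r_{n,k}). *)
Definition good_seq (n k : nat) (G : seq fml) (B : fml) : bool :=
  [&& size G == k, fsize B == n & fr B == iota 0 n.+1].

Definition Lder (n k : nat) : Type :=
  { G : seq fml & { B : fml & (deriv G B * (good_seq n k G B = true))%type } }.

Definition Rder (n k : nat) : Type :=
  { G : seq fml & { B : fml &
      (deriv G B * ((good_seq n k G B && irreducible G) = true))%type } }.

Definition HasCard (T : Type) (m : nat) : Prop :=
  exists f : 'I_m -> T, bijective f.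

(* Bivariate formal power series in z, x with integer coefficients:
   F n k is the coefficient of z^n x^k. *)
Definition ser := nat -> nat -> int.
Definition gf (c : nat -> nat -> nat) : ser := fun n k => (c n k)%:Z.
Definition sadd (F G : ser) : ser := fun n k => F n k + G n k.
Definition ssub (F G : ser) : ser := fun n k => F n k - G n k.
Definition smul (F G : ser) : ser := fun n k =>
  \sum_(a < n.+1) \sum_(c < k.+1) F a c * G (n - a)%N (k - c)%N.
Definition sx : ser := fun n k => ((n == 0%N) && (k == 1%N))%:R.
Definition sz : ser := fun n k => ((n == 1%N) && (k == 0%N))%:R.
Definition coef_x1 (F : ser) : ser := fun n k => if k == 0%N then F n 1%N else 0.

(* Main.v *)
From Stdlib Require IndefiniteDescription FunctionalExtensionality.
Require Import Defs.
From mathcomp Require Import all_boot all_algebra.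
Require Import Defs.
Set Implicit Arguments. Unset Strict Implicit. Unset Printing Implicit Defensive.

Lemma deriv_ne G B : deriv G B -> G <> [::].
Proof. by elim=> // G0 D A B0 _ _ IH _ _; case: G0 IH. Qed.

Lemma deriv_fr G B : deriv G B -> flatten (map fr G) = fr B.
Proof.
elim=> [p|A B0 D C _ IH|G0 D A B0 _ _ IH1 _ IH2] /=; rewrite ?cats0 //.
  by rewrite -IH /= catA.
by rewrite map_cat flatten_cat IH1 IH2.
Qed.

Lemma size_fr A : size (fr A) = (fsize A).+1.
Proof. by elim: A => //= A IHA B IHB; rewrite size_cat IHA IHB addSn addnS. Qed.

Fixpoint rf (f : nat -> nat) (A : fml) : fml :=
  match A with At p => At (f p) | Prod A B => Prod (rf f A) (rf f B) end.

Lemma fsize_rf f A : fsize (rf f A) = fsize A.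
Proof. by elim: A => //= A -> B ->. Qed.
Lemma fr_rf f A : fr (rf f A) = map f (fr A).
Proof. by elim: A => //= A -> B ->; rewrite map_cat. Qed.

Definition TD := {G : seq fml & {B : fml & deriv G B}}.
Definition mkT G B (d : deriv G B) : TD := existT _ G (existT _ B d).
Definition ctxT (t : TD) := projT1 t.
Definition goalT (t : TD) := projT1 (projT2 t).
Definition drvT (t : TD) : deriv (ctxT t) (goalT t) := projT2 (projT2 t).

Definition liftL (t : TD) : TD :=
  match t with existT G (existT C d) =>
   (match G as G0 return deriv G0 C -> TD with
    | A :: B :: D => fun d => mkT (d_L d)
    | G0 => fun d => mkT d end) d end.

Definition combR (t1 t2 : TD) : TD :=
  match t1, t2 with existT G (existT A d1), existT D (existT B d2) =>
   (match G as G0 return deriv G0 A -> TD with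
    | At p :: G' => fun d1 => mkT (@d_R (At p :: G') D A B erefl d1 d2)
    | G0 => fun d1 => mkT d1 end) d1 end.

Fixpoint rd (f : nat -> nat) G B (d : deriv G B) {struct d} : TD :=
  match d with
  | d_id p => mkT (d_id (f p))
  | d_L A B D C d' => liftL (rd f d')
  | d_R G D A B _ dA dB => combR (rd f dA) (rd f dB)
  end.

Lemma liftL_spec t A B D : ctxT t = A :: B :: D ->
  ctxT (liftL t) = Prod A B :: D /\ goalT (liftL t) = goalT t.
Proof. by case: t => G [C d] /= E; subst G. Qed.

Lemma combR_spec t1 t2 : irreducible (ctxT t1) -> ctxT t1 <> [::] ->
  ctxT (combR t1 t2) = ctxT t1 ++ ctxT t2 /\ goalT (combR t1 t2) = Prod (goalT t1) (goalT t2).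
Proof. by case: t1 => [[|[p|A0 B0] G'] [A d1]]; case: t2 => D [B d2]. Qed.

Lemma irr_map f G : irreducible (map (rf f) G) = irreducible G.
Proof. by case: G => [|[]]. Qed.

Lemma rd_spec f G B (d : deriv G B) :
  ctxT (rd f d) = map (rf f) G /\ goalT (rd f d) = rf f B.
Proof.
elim: d => [p|A B0 D C d' [IH1 IH2]|G0 D A B0 ir dA [IA1 IA2] dB [IB1 IB2]] //=.
  by have [-> ->] := liftL_spec IH1.
have h1 : irreducible (ctxT (rd f dA)) by rewrite IA1 irr_map.
have h2 : ctxT (rd f dA) <> [::].
  by rewrite IA1; case: G0 dA {IA1 IA2 ir h1} => // /deriv_ne.
have [-> ->] := combR_spec (rd f dB) h1 h2.
by rewrite IA1 IB1 IA2 IB2 map_cat.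
Qed.

Definition renT f (t : TD) := rd f (drvT t).

Lemma renT_liftL g t A B D : ctxT t = A :: B :: D -> renT g (liftL t) = liftL (renT g t).
Proof. by case: t => G [C d] /= E; subst G. Qed.

Lemma renT_combR g t1 t2 : irreducible (ctxT t1) -> ctxT t1 <> [::] ->
  renT g (combR t1 t2) = combR (renT g t1) (renT g t2).
Proof. by case: t1 => [[|[p|A0 B0] G'] [A d1]]; case: t2 => D [B d2]. Qed.

Lemma rd_rd f g G B (d : deriv G B) : {in fr B, forall p, g (f p) = p} ->
  renT g (rd f d) = mkT d.
Proof.
elim: d => [p|A B0 D C d' IH|G0 D A B0 ir dA IHA dB IHB] /= H.
- by rewrite /renT /= H // mem_head.
- have [E _] := rd_spec f d'.
  by rewrite (renT_liftL _ E) IH.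
- have [EA _] := rd_spec f dA.
  have neA := deriv_ne dA.
  rewrite renT_combR ?IHA ?IHB; first last.
  + by rewrite EA; case: G0 {EA ir dA IHA} neA.
  + by rewrite EA irr_map.
  + by move=> p hp; apply: H; rewrite /= mem_cat hp ?orbT.
  + by move=> p hp; apply: H; rewrite /= mem_cat hp ?orbT.
  case: G0 ir dA {IHA EA} neA => [|[p|A0 B1] G'] ir dA neA //=.
  by rewrite (bool_irrelevance ir erefl).
Qed.

Definition iso (T U : Type) := {f : T -> U & {g : U -> T & (cancel f g * cancel g f)%type}}.

Lemma HasCard_iso T m : HasCard T m -> iso 'I_m T.
Proof.
move=> H. have [f Hf] := IndefiniteDescription.constructive_indefinite_description _ H.
have [g Hg] : {g : T -> 'I_m | cancel f g /\ cancel g f}.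
  by apply: IndefiniteDescription.constructive_indefinite_description; case: Hf => g; exists g.
by exists f, g; case: Hg.
Defined.

Lemma card_of T m (F : finType) : HasCard T m -> iso F T -> m = #|F|.
Proof.
move=> /HasCard_iso [f1 [g1 [c1 c2]]] [f2 [g2 [d1 d2]]].
rewrite -[m]card_ord; apply: (@bij_eq_card _ _ (fun i => g2 (f1 i))).
by exists (fun x => g1 (f2 x)) => x; rewrite ?d2 ?c1 ?c2 ?d1.
Qed.

Lemma iso_sym T U : iso T U -> iso U T.
Proof. by case=> f [g [c1 c2]]; exists g, f. Defined.
Lemma iso_trans T U V : iso T U -> iso U V -> iso T V.
Proof.
case=> f [g [c1 c2]] [f' [g' [c1' c2']]]; exists (fun x => f' (f x)), (fun x => g (g' x)).
by split=> x; rewrite ?c1' ?c1 ?c2 ?c2'.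
Defined.
Lemma iso_sum T1 U1 T2 U2 : iso T1 U1 -> iso T2 U2 -> iso (T1 + T2) (U1 + U2).
Proof.
case=> f [g [c1 c2]] [f' [g' [c1' c2']]].
exists (fun x => match x with inl a => inl (f a) | inr b => inr (f' b) end).
exists (fun x => match x with inl a => inl (g a) | inr b => inr (g' b) end).
by split=> [[a|b]|[a|b]]; rewrite ?c1 ?c2 ?c1' ?c2'.
Defined.

Definition invL_gen G C (d : deriv G C) :
  match G with Prod A B :: D => deriv (A :: B :: D) C | _ => unit end.
Proof.
destruct d as [p|A B D C d|G D A B ir dA dB].
- exact tt.
- exact d.
- destruct G as [|[p|A0 B0] G'].
  + exact (False_rect _ (deriv_ne dA erefl)).
  + exact tt.
  + exact (False_rect _ (Bool.diff_false_true ir)).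
Defined.

Lemma invL_eq_gen G C (d : deriv G C) :
  match G as G0 return deriv G0 C -> Prop with
  | Prod A B :: D => fun d => d_L (invL_gen d) = d | _ => fun _ => True end d.
Proof.
destruct d as [p|A B D C d|G D A B ir dA dB] => //.
destruct G as [|[p|A0 B0] G'] => //.
by case: (deriv_ne dA).
Qed.

Lemma invL_eq A B D C (d : deriv (Prod A B :: D) C) : d_L (invL_gen d) = d.
Proof. exact: (invL_eq_gen d). Qed.

Lemma goodR n k G B : good_seq n k G B = true -> irreducible G = true ->
  (good_seq n k G B && irreducible G) = true.
Proof. by move=> -> ->. Qed.
Lemma goodP n k G B : (good_seq n k G B && irreducible G) = true -> good_seq n k G B = true.
Proof. by case/andP. Qed.
Lemma goodA n k A B0 D C : good_seq n k (Prod A B0 :: D) C = true ->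
  good_seq n k.+1 (A :: B0 :: D) C = true.
Proof. exact. Qed.
Lemma goodA' n k A B0 D C : good_seq n k.+1 (A :: B0 :: D) C = true ->
  good_seq n k (Prod A B0 :: D) C = true.
Proof. exact. Qed.
Lemma bad0 n k B : good_seq n k.+1 [::] B = true -> False.
Proof. by []. Qed.
Lemma bad1 n k A B : 0 < k -> good_seq n k.+1 [:: A] B = true -> False.
Proof. by case: k. Qed.

Definition fwdA n k (x : Lder n k) : Rder n k + Lder n k.+1 :=
 match x with existT G (existT B (d, pf)) =>
  (match G as G0 return deriv G0 B -> good_seq n k G0 B = true -> Rder n k + Lder n k.+1 with
   | [::] => fun d pf => inl (existT _ [::] (existT _ B (d, goodR pf erefl)))
   | At p :: D => fun d pf => inl (existT _ (At p :: D) (existT _ B (d, goodR pf erefl)))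
   | Prod A B0 :: D => fun d pf =>
       inr (existT _ (A :: B0 :: D) (existT _ B (invL_gen d, goodA pf)))
   end) d pf end.

Definition bwdA n k (hk : 0 < k) (y : Rder n k + Lder n k.+1) : Lder n k :=
 match y with
 | inl (existT G (existT B (d, pf))) => existT _ G (existT _ B (d, goodP pf))
 | inr (existT G (existT B (d, pf))) =>
   (match G as G0 return deriv G0 B -> good_seq n k.+1 G0 B = true -> Lder n k with
    | A :: B0 :: D => fun d pf => existT _ (Prod A B0 :: D) (existT _ B (d_L d, goodA' pf))
    | [::] => fun d pf => False_rect _ (bad0 pf)
    | [:: A] => fun d pf => False_rect _ (bad1 hk pf)
   end) d pf
 end.

Lemma Lder_eq n k G B (d1 d2 : deriv G B) p1 p2 : d1 = d2 ->
  existT _ G (existT _ B (d1, p1)) = existT _ G (existT _ B (d2, p2)) :> Lder n k.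
Proof. by move=> <-; rewrite (bool_irrelevance p1 p2). Qed.
Lemma Rder_eq n k G B (d1 d2 : deriv G B) p1 p2 : d1 = d2 ->
  existT _ G (existT _ B (d1, p1)) = existT _ G (existT _ B (d2, p2)) :> Rder n k.
Proof. by move=> <-; rewrite (bool_irrelevance p1 p2). Qed.

Lemma isoA n k : 0 < k -> iso (Lder n k) (Rder n k + Lder n k.+1).
Proof.
move=> hk; exists (@fwdA n k), (@bwdA n k hk); split.
- case=> G [B [d pf]]; case: G d pf => [|[p|A B0] D] d pf /=; try exact: Lder_eq.
  by apply: Lder_eq; apply: invL_eq.
- case=> [[G [B [d pf]]]|[G [B [d pf]]]].
  + case: G d pf => [|[p|A B0] D] d pf /=; try (congr inl; exact: Rder_eq).
    by exfalso; move: pf; rewrite andbF.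
  + case: G d pf => [|X [|Y D]] d pf /=.
    * by case: (bad0 pf).
    * by case: (bad1 hk pf).
    * by congr inr; apply: Lder_eq.
Qed.

Lemma HasCard0 T m : HasCard T m -> (T -> False) -> m = 0.
Proof. by case: m => // m [f _] H; case: (H (f ord0)). Qed.

Lemma HasCard1 T m (t : T) : HasCard T m -> (forall x y : T, x = y) -> m = 1.
Proof.
move=> H U; rewrite (card_of H (_ : iso unit T)) ?card_unit //.
by exists (fun _ => t), (fun _ => tt); split=> [[]|x] //; apply: U.
Qed.

Lemma Lder_k0 n (x : Lder n 0) : False.
Proof.
case: x => G [B [d pf]]; case: G d pf => [|X G] d pf; first exact: (deriv_ne d).
by move: pf; rewrite /good_seq.
Qed.
Lemma Rder_k0 n (x : Rder n 0) : False.
Proof.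
case: x => G [B [d pf]]; case: G d pf => [|X G] d pf; first exact: (deriv_ne d).
by move: pf; rewrite /good_seq.
Qed.

Lemma Rder_0k k (x : Rder 0 k) : k = 1.
Proof.
case: x => G [B [d pf]]; case: d pf => [p|A B0 D C d|G0 D A B0 ir dA dB] pf.
- by move/andP: pf => [/and3P[/eqP <- _ _] _].
- by exfalso; move: pf; rewrite andbF.
- by exfalso; move: pf => /andP[/and3P[]].
Qed.

Definition r0 : Rder 0 1 := existT _ [:: At 0] (existT _ (At 0) (d_id 0, erefl)).

Lemma Rder_01 (x : Rder 0 1) : x = r0.
Proof.
case: x => G [B [d pf]]; case: d pf => [p|A B0 D C d|G0 D A B0 ir dA dB] pf.
- have ep : p = 0.
    by move/andP: pf => [/and3P[_ _ /eqP [->]] _].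
  subst p; exact: Rder_eq.
- by exfalso; move: pf; rewrite andbF.
- by exfalso; move: pf => /andP[/and3P[]].
Qed.

Lemma fr_split A B0 m : fr (Prod A B0) = iota 0 m.+1 ->
  fr A = iota 0 (fsize A).+1 /\ fr B0 = iota (fsize A).+1 (fsize B0).+1.
Proof.
move=> E; have Es := congr1 size E; rewrite /= size_cat !size_fr size_iota in Es.
change (fr A ++ fr B0 = iota 0 m.+1) in E; move: E; rewrite -Es iotaD add0n => /eqP.
by rewrite eqseq_cat ?size_fr ?size_iota // => /andP[/eqP -> /eqP ->].
Qed.

Lemma goodD n k G1 D A B0 :
  (good_seq n.+1 k (G1 ++ D) (Prod A B0) && irreducible (G1 ++ D)) = true ->
  [/\ fsize A + fsize B0 = n, size G1 + size D = k,
      fr A = iota 0 (fsize A).+1 & fr B0 = iota (fsize A).+1 (fsize B0).+1].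
Proof.
case/andP => /and3P[/eqP E1 /eqP E2 /eqP E3] _.
have [h1 h2] := fr_split E3.
by split => //; [case: E2 | rewrite -size_cat].
Qed.

Definition unsh (s : nat) := subn^~ s.
Definition sh (s : nat) := addn^~ s.

Lemma decA n k G1 D A B0 :
  (good_seq n.+1 k (G1 ++ D) (Prod A B0) && irreducible (G1 ++ D)) = true -> fsize A < n.+1.
Proof. by case/goodD => <- _ _ _; rewrite ltnS leq_addr. Qed.
Lemma decC n k G1 D A B0 :
  (good_seq n.+1 k (G1 ++ D) (Prod A B0) && irreducible (G1 ++ D)) = true -> size G1 < k.+1.
Proof. by case/goodD => _ <- _ _; rewrite ltnS leq_addr. Qed.
Lemma decRA n k G1 D A B0 : irreducible G1 = true ->
  (good_seq n.+1 k (G1 ++ D) (Prod A B0) && irreducible (G1 ++ D)) = true ->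
  (good_seq (fsize A) (size G1) G1 A && irreducible G1) = true.
Proof. by move=> ir /goodD[_ _ h _]; rewrite /good_seq ir h !eqxx. Qed.

Lemma map_unsh s m : map (unsh s) (iota s m) = iota 0 m.
Proof.
rewrite -[s]addn0 iotaDl -map_comp addn0 -[RHS]map_id; apply: eq_map => x /=.
by rewrite /unsh addKn.
Qed.
Lemma map_sh s m : map (sh s) (iota 0 m) = iota s m.
Proof.
have -> : iota s m = iota (s + 0) m by rewrite addn0.
rewrite iotaDl; apply: eq_map => x /=.
by rewrite /sh addnC.
Qed.

Lemma decLB n k G1 D A B0 (dB : deriv D B0) :
  (good_seq n.+1 k (G1 ++ D) (Prod A B0) && irreducible (G1 ++ D)) = true ->
  good_seq (n - fsize A) (k - size G1) (ctxT (rd (unsh (fsize A).+1) dB))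
     (goalT (rd (unsh (fsize A).+1) dB)) = true.
Proof.
case/goodD => E1 E2 _ E4; have [-> ->] := rd_spec (unsh (fsize A).+1) dB.
rewrite /good_seq size_map fsize_rf fr_rf E4 map_unsh -E1 -E2 !addKn !eqxx.
by [].
Qed.

Lemma decId n k p B : (good_seq n.+1 k [:: At p] B && irreducible [:: At p]) = true ->
  B = At p -> False.
Proof. by move=> pf eB; subst B; move: pf => /andP[/and3P[]]. Qed.

Definition P n k := {ac : nat * nat &
  (Rder ac.1 ac.2 * Lder (n - ac.1) (k - ac.2) * (ac.1 < n.+1) * (ac.2 < k.+1))%type}.

Definition decomp_d n k G B (d : deriv G B) :
  (good_seq n.+1 k G B && irreducible G) = true -> P n k :=
 match d in deriv G0 B0 return (good_seq n.+1 k G0 B0 && irreducible G0) = true -> P n k with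
 | d_id p => fun pf => False_rect _ (decId pf erefl)
 | d_L A B0 D C _ => fun pf => False_rect _ (Bool.diff_false_true (etrans (esym (andbF _)) pf))
 | d_R G1 D A B0 ir dA dB => fun pf =>
    existT (fun ac : nat * nat =>
      (Rder ac.1 ac.2 * Lder (n - ac.1) (k - ac.2) * (ac.1 < n.+1) * (ac.2 < k.+1))%type)
     (fsize A, size G1)
     (existT _ G1 (existT _ A (dA, decRA ir pf)),
      existT _ (ctxT (rd (unsh (fsize A).+1) dB))
        (existT _ (goalT (rd (unsh (fsize A).+1) dB)) (drvT (rd (unsh (fsize A).+1) dB), decLB dB pf)),
      decA pf, decC pf)
 end.

Definition decomp n k (x : Rder n.+1 k) : P n k :=
  match x with existT G (existT B (d, pf)) => decomp_d d pf end.

Lemma combIrr a c G1 A : (good_seq a c G1 A && irreducible G1) = true -> irreducible G1 = true.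
Proof. by case/andP. Qed.

Lemma irr_cat G D : irreducible G -> G <> [::] -> irreducible (G ++ D).
Proof. by case: G => [|[]]. Qed.

Lemma combPf n k a c G1 A D B0 (dA : deriv G1 A) (dB : deriv D B0) :
  a < n.+1 -> c < k.+1 -> (good_seq a c G1 A && irreducible G1) = true ->
  good_seq (n - a) (k - c) D B0 = true ->
  (good_seq n.+1 k (G1 ++ ctxT (rd (sh a.+1) dB)) (Prod A (goalT (rd (sh a.+1) dB)))
    && irreducible (G1 ++ ctxT (rd (sh a.+1) dB))) = true.
Proof.
move=> ha hc /andP[/and3P[/eqP E1 /eqP E2 /eqP E3] ir] /and3P[/eqP F1 /eqP F2 /eqP F3].
have [-> ->] := rd_spec (sh a.+1) dB.
have -> : irreducible (G1 ++ map (rf (sh a.+1)) D) by apply: irr_cat => //; apply: deriv_ne dA.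
rewrite ltnS in ha hc.
rewrite andbT; apply/and3P; split; apply/eqP.
- by rewrite size_cat size_map E1 F1 subnKC.
- by change ((fsize A + fsize (rf (sh a.+1) B0)).+1 = n.+1); rewrite fsize_rf E2 F2 subnKC.
- change (fr A ++ fr (rf (sh a.+1) B0) = iota 0 n.+2); rewrite fr_rf F3 map_sh E3.
  have -> : n.+2 = a.+1 + (n - a).+1 by rewrite addSn addnS subnKC.
  by rewrite iotaD.
Qed.

Definition comb n k (y : P n k) : Rder n.+1 k :=
 match y with existT (a, c) (x1, x2, ha, hc) =>
   match x1, x2 with existT G1 (existT A (dA, pf1)), existT D (existT B0 (dB, pf2)) =>
     existT _ (G1 ++ ctxT (rd (sh a.+1) dB))
      (existT _ (Prod A (goalT (rd (sh a.+1) dB)))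
        (d_R (combIrr pf1) dA (drvT (rd (sh a.+1) dB)), combPf dA dB ha hc pf1 pf2))
 end end.

Lemma comb_eq n k G1 D A B0 (ir ir' : irreducible G1) (dA : deriv G1 A) (dB : deriv D B0)
  (t : TD) pf pf' : t = mkT dB ->
  existT _ (G1 ++ ctxT t) (existT _ (Prod A (goalT t)) (d_R ir' dA (drvT t), pf'))
  = existT _ (G1 ++ D) (existT _ (Prod A B0) (d_R ir dA dB, pf)) :> Rder n.+1 k.
Proof. by move=> E; subst t; rewrite (bool_irrelevance ir' ir); exact: Rder_eq. Qed.

Lemma comb_decomp n k (x : Rder n.+1 k) : comb (decomp x) = x.
Proof.
case: x => G [B [d pf]]; case: d pf => [p|A B0 D C d|G1 D A B0 ir dA dB] pf.
- by case: (decId pf erefl).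
- by exfalso; move: pf; rewrite andbF.
- have [_ _ _ E4] := goodD pf.
  apply: comb_eq; apply: rd_rd => q; rewrite E4 mem_iota => /andP[h _].
  by rewrite /sh /unsh subnK.
Qed.

Lemma decomp_eq n k G1 D A B0 (dA : deriv G1 A) (dB : deriv D B0) (t : TD) q1 q2 q3 q4 pf1 pf2 ha hc :
  t = mkT dB ->
  existT (fun ac : nat * nat =>
      (Rder ac.1 ac.2 * Lder (n - ac.1) (k - ac.2) * (ac.1 < n.+1) * (ac.2 < k.+1))%type)
     (fsize A, size G1)
     (existT _ G1 (existT _ A (dA, q1)),
      existT _ (ctxT t) (existT _ (goalT t) (drvT t, q2)), q3, q4)
  = existT _ (fsize A, size G1)
     (existT _ G1 (existT _ A (dA, pf1)),
      existT _ D (existT _ B0 (dB, pf2)), ha, hc) :> P n k.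
Proof.
move=> E; subst t.
by rewrite (bool_irrelevance q1 pf1) (bool_irrelevance q2 pf2) (bool_irrelevance q3 ha)
  (bool_irrelevance q4 hc).
Qed.

Lemma decomp_comb n k (y : P n k) : decomp (comb y) = y.
Proof.
case: y => [[a c] [[[x1 x2] ha] hc]].
case: x1 => G1 [A [dA pf1]]; case: x2 => D [B0 [dB pf2]].
have E2 : fsize A = a by case/andP: pf1 => /and3P[_ /eqP -> _].
have E1 : size G1 = c by case/andP: pf1 => /and3P[/eqP -> _ _].
subst a c.
apply: decomp_eq; apply: rd_rd => q _.
by rewrite /sh /unsh addnK.
Qed.

Section Count.
Variables (r l : nat -> nat -> nat).
Variable isoR : forall a c, iso 'I_(r a c) (Rder a c).
Variable isoL : forall a c, iso 'I_(l a c) (Lder a c).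

Definition FT n k (ac : 'I_n.+1 * 'I_k.+1) : finType :=
  ('I_(r ac.1 ac.2) * 'I_(l (n - ac.1) (k - ac.2)))%type.

Definition FF n k := {ac : 'I_n.+1 * 'I_k.+1 & FT ac}.

Definition FtoP n k (y : FF n k) : P n k :=
  match y with existT ac (i, j) =>
    existT (fun ac : nat * nat =>
      (Rder ac.1 ac.2 * Lder (n - ac.1) (k - ac.2) * (ac.1 < n.+1) * (ac.2 < k.+1))%type)
    (nat_of_ord ac.1, nat_of_ord ac.2)
    (projT1 (isoR _ _) i, projT1 (isoL _ _) j, ltn_ord ac.1, ltn_ord ac.2) end.

Definition PtoF n k (y : P n k) : FF n k :=
  match y with existT ac (x1, x2, ha, hc) =>
    existT (@FT n k) (Ordinal ha, Ordinal hc)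
      (projT1 (projT2 (isoR _ _)) x1, projT1 (projT2 (isoL _ _)) x2) end.

Lemma FF_eq n k a c (ha ha' : a < n.+1) (hc hc' : c < k.+1)
  (i i' : 'I_(r a c)) (j j' : 'I_(l (n - a) (k - c))) : i' = i -> j' = j ->
  existT (@FT n k) (Ordinal ha', Ordinal hc') (i', j') = existT (@FT n k) (Ordinal ha, Ordinal hc) (i, j).
Proof. by move=> -> ->; rewrite (bool_irrelevance ha' ha) (bool_irrelevance hc' hc). Qed.

Lemma P_eq n k a c (ha ha' : a < n.+1) (hc hc' : c < k.+1)
  (x1 x1' : Rder a c) (x2 x2' : Lder (n - a) (k - c)) : x1' = x1 -> x2' = x2 ->
  existT (fun ac : nat * nat =>
      (Rder ac.1 ac.2 * Lder (n - ac.1) (k - ac.2) * (ac.1 < n.+1) * (ac.2 < k.+1))%type)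
   (a, c) (x1', x2', ha', hc') = existT _ (a, c) (x1, x2, ha, hc) :> P n k.
Proof. by move=> -> ->; rewrite (bool_irrelevance ha' ha) (bool_irrelevance hc' hc). Qed.

Lemma isoFP n k : iso (FF n k) (P n k).
Proof.
exists (@FtoP n k), (@PtoF n k); split.
- case=> [[[a ha] [c hc]] [i j]].
  apply: FF_eq; [exact: (fst (projT2 (projT2 (isoR _ _)))) | exact: (fst (projT2 (projT2 (isoL _ _))))].
- case=> [[a c] [[[x1 x2] ha] hc]].
  apply: P_eq; [exact: (snd (projT2 (projT2 (isoR _ _)))) | exact: (snd (projT2 (projT2 (isoL _ _))))].
Qed.

Lemma card_FF n k : #|{: FF n k}| = \sum_(a < n.+1) \sum_(c < k.+1) r a c * l (n - a) (k - c).
Proof.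
rewrite card_tagged sumnE big_map big_enum /= pair_big /=.
by apply: eq_bigr => [[a c]] _; rewrite /FT card_prod !card_ord.
Qed.

End Count.

Local Open Scope ring_scope.
Import GRing.Theory.

Lemma sum0 m (G : 'I_m -> int) : (forall i, G i = 0) -> \sum_(i < m) G i = 0.
Proof. by move=> H; apply: big1 => i _; apply: H. Qed.

Lemma smul_sx (F : ser) n k : smul sx F n k = if k is k'.+1 then F n k' else 0.
Proof.
rewrite /smul big_ord_recl /= [X in _ + X]sum0 ?addr0 => [|i]; last first.
  by apply: sum0 => c; rewrite /sx /= mul0r.
case: k => [|k]; first by rewrite big_ord_recl big_ord0 /sx /= mul0r addr0.
rewrite big_ord_recl /= {1}/sx /= mul0r add0r big_ord_recl /= [X in _ + X]sum0 ?addr0 => [|c].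
  by rewrite /sx /= mul1r subn0 subn1.
by rewrite /sx /= mul0r.
Qed.

Lemma smul_sz (F : ser) n k : smul sz F n k = if n is n'.+1 then F n' k else 0.
Proof.
case: n => [|n].
  rewrite /smul big_ord_recl big_ord0 addr0 sum0 // => c.
  by rewrite /sz /= mul0r.
rewrite /smul big_ord_recl /= [X in X + _]sum0 ?add0r => [|c]; last by rewrite /sz /= mul0r.
rewrite big_ord_recl /= [X in _ + X]sum0 ?addr0 => [|i]; last first.
  by apply: sum0 => c; rewrite /sz /= mul0r.
rewrite big_ord_recl /= [X in _ + X]sum0 ?addr0 => [|c]; last by rewrite /sz /= ?andbF mul0r.
by rewrite /sz /= mul1r subn0 subn1.
Qed.

Definition isoRD n k : iso (P n k) (Rder n.+1 k) :=
  existT _ (@comb n k) (existT _ (@decomp n k) (@decomp_comb n k, @comb_decomp n k)).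

Theorem proposition3p2 (l r : nat -> nat -> nat) :
  (forall n k, HasCard (Lder n k) (l n k)) ->
  (forall n k, HasCard (Rder n k) (r n k)) ->
  let L := gf l in let R := gf r in
  (* L = x^{-1} (L - x L_1) + R, multiplied through by x *)
  smul sx L = sadd (ssub L (smul sx (coef_x1 L))) (smul sx R) /\
  (* R = z R L + x *)
  R = sadd (smul sz (smul R L)) sx.
Proof.
move=> HL HR L R.
have isoR a c := HasCard_iso (HR a c).
have isoL a c := HasCard_iso (HL a c).
have N1 n : l n 0%N = 0%N by apply: HasCard0 (HL n 0%N) (@Lder_k0 n).
have N2 n : r n 0%N = 0%N by apply: HasCard0 (HR n 0%N) (@Rder_k0 n).
have N3 n k : (0 < k)%N -> l n k = (r n k + l n k.+1)%N.
  move=> hk; rewrite (card_of (HL n k) (iso_trans (iso_sum (isoR n k) (isoL n k.+1)) (iso_sym (isoA n hk)))).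
  by rewrite card_sum !card_ord.
have N4a : r 0%N 1%N = 1%N.
  by apply: (HasCard1 r0 (HR 0%N 1%N)) => x y; rewrite (Rder_01 x) (Rder_01 y).
have N4b k : k <> 1%N -> r 0%N k = 0%N.
  by move=> hk; exact: (HasCard0 (HR 0%N k) (fun x => hk (Rder_0k x))).
have N5 n k : r n.+1 k = (\sum_(a < n.+1) \sum_(c < k.+1) r a c * l (n - a) (k - c))%N.
  by rewrite (card_of (HR n.+1 k) (iso_trans (isoFP isoR isoL n k) (isoRD n k))) card_FF.
split.
- apply: FunctionalExtensionality.functional_extensionality => n.
  apply: FunctionalExtensionality.functional_extensionality => k.
  rewrite /sadd /ssub !smul_sx /L /R /gf /coef_x1.
  case: k => [|[|k]] /=.
  + by rewrite N1 subr0 addr0.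
  + by rewrite N1 N2 subrr addr0.
  + by rewrite (N3 n k.+1) // PoszD subr0 addrC.
- apply: FunctionalExtensionality.functional_extensionality => n.
  apply: FunctionalExtensionality.functional_extensionality => k.
  rewrite /sadd smul_sz /R /gf /sx.
  case: n => [|n].
    by rewrite add0r; case: k => [|[|k]] /=; rewrite ?N4a ?N4b.
  rewrite N5 /smul addr0 -natz natr_sum; apply: eq_bigr => a _.
  rewrite natr_sum; apply: eq_bigr => c _.
  by rewrite natrM !natz.
Qed.
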